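(* Let $V$ be a complex vector space of finite dimension $N$ and let $(R,F)$ be a couple of compatible braidings on $V\otimes V$. Put $\mathcal{R}=R\,F$. Then for any $N\times N$ matrix $A$ (with entries in $\mathbb{C}$ or in any associative $\mathbb{C}$-algebra, the braidings acting on the numerical tensor factors) $$\mathcal{R}_{12}\,A_{\overline 3}=A_{\overline 3}\,\mathcal{R}_{12},$$ where $\mathcal{R}_{12}=R_{12}F_{12}$ and $A_{\overline 3}=F_{23}F_{12}A_1F_{12}^{-1}F_{23}^{-1}$.
   Context: A braiding is an invertible operator $R\in\mathrm{End}(V\otimes V)$ satisfying $(R\otimes I)(I\otimes R)(R\otimes I)=(I\otimes R)(R\otimes I)(I\otimes R)$. In $\mathrm{End}(V^{\otimes 3})$, $X_{12}=X\otimes I$, $X_{23}=I\otimes X$ for $X\in\mathrm{End}(V\otimes V)$, and $A_1=A\otimes I\otimes I$ for an $N\times N$ matrix $A$. Braidings $R,F$ are compatible if $R_{12}F_{23}F_{12}=F_{23}F_{12}R_{23}$ and $R_{23}F_{12}F_{23}=F_{12}F_{23}R_{12}$. *)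

(* Defs.v *)
(* V = C^N with C = R[i] (complex numbers over a realType R). *)
From mathcomp Require Import all_boot all_algebra.
From mathcomp Require Import reals complex mxtens.

Set Implicit Arguments.
Unset Strict Implicit.
Unset Printing Implicit Defensive.

Import GRing.Theory.
Local Open Scope ring_scope.

(* Operators on V^{(x)3} are (N*N*N) x (N*N*N) matrices, with the basis of
   V (x) V (x) V indexed by (i*N + j)*N + k (Kronecker convention of mxtens). *)

Definition op12 {K : pzRingType} {N : nat} (X : 'M[K]_(N * N)) : 'M[K]_(N * N * N) :=
  tensmx X (1%:M : 'M[K]_N).

Definition op23 {K : pzRingType} {N : nat} (X : 'M[K]_(N * N)) : 'M[K]_(N * N * N) :=
  castmx (mulnA N N N, mulnA N N N) (tensmx (1%:M : 'M[K]_N) X).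

Definition op1 {K : pzRingType} {N : nat} (A : 'M[K]_N) : 'M[K]_(N * N * N) :=
  castmx (mulnA N N N, mulnA N N N) (tensmx A (1%:M : 'M[K]_(N * N))).

Definition is_braiding {K : comUnitRingType} {N : nat} (R : 'M[K]_(N * N)) : Prop :=
  R \in unitmx /\
  op12 R *m op23 R *m op12 R = op23 R *m op12 R *m op23 R.

Definition compatible {K : comUnitRingType} {N : nat} (R F : 'M[K]_(N * N)) : Prop :=
  op12 R *m op23 F *m op12 F = op23 F *m op12 F *m op23 R /\
  op23 R *m op12 F *m op23 F = op12 F *m op23 F *m op12 R.

(* Scalar (numerical) operators acting on matrices with entries in a C-algebra B. *)
Definition liftB {C : comUnitRingType} (B : algType C) {m n : nat}
  (X : 'M[C]_(m, n)) : 'M[B]_(m, n) := map_mx (in_alg B) X.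

(* Main.v *)
Require Import Defs.
From mathcomp Require Import all_boot all_algebra.
From mathcomp Require Import reals complex mxtens.
Import GRing.Theory.
Local Open Scope ring_scope.

Lemma tensmx_mulc (R : pzRingType) m n p q r s
  (A : 'M[R]_(m,n)) (B : 'M[R]_(p,q)) (C : 'M[R]_(n, r)) (D : 'M[R]_(q, s)) :
  (forall i j k l, B i j * C k l = C k l * B i j) ->
  (tensmx A B) *m (tensmx C D) = tensmx (A *m C) (B *m D).
Proof.
move=> hBC; apply/matrixP=> /= i j.
case (mxtens_indexP i)=> [im ip] {i}; case (mxtens_indexP j)=> [jr js] {j}.
rewrite !mxE !mxtens_indexK mulr_sum; apply: congr_big=> // k _.
rewrite !mxE !mxtens_indexK.
by rewrite -!mulrA; congr (_ * _); rewrite !mulrA hBC.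
Qed.

Lemma castmx_mulsq (R : pzRingType) m m' (e : m = m') (M M' : 'M[R]_m) :
  castmx (e, e) M *m castmx (e, e) M' = castmx (e, e) (M *m M').
Proof. by case: m' / e. Qed.

Lemma castmx1sq (R : pzRingType) m m' (e : m = m') :
  castmx (e, e) (1%:M : 'M[R]_m) = 1%:M.
Proof. by case: m' / e. Qed.

Lemma tens11 (R : pzRingType) m n :
  tensmx (1%:M : 'M[R]_m) (1%:M : 'M[R]_n) = 1%:M.
Proof.
apply/matrixP=> i j.
case (mxtens_indexP i)=> [a b] {i}; case (mxtens_indexP j)=> [c d] {j}.
rewrite tensmxE !mxE.
have -> : (mxtens_index (a, b) == mxtens_index (c, d)) = ((a, b) == (c, d)).
  apply/eqP/eqP=> [h|->//].
  by rewrite -(mxtens_indexK (a, b)) h mxtens_indexK.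
rewrite xpair_eqE; case: (a == c); case: (b == d); by rewrite ?mulr1 ?mulr0.
Qed.

Lemma op12M (K : pzRingType) N (X Y : 'M[K]_(N * N)) :
  op12 X *m op12 Y = op12 (X *m Y).
Proof.
rewrite /op12 tensmx_mulc ?mulmx1 // => i j k l.
by rewrite !mxE; case: (i == j); rewrite ?mulr1n ?mul1r ?mulr1 ?mulr0n ?mul0r ?mulr0.
Qed.

Lemma op23M (K : pzRingType) N (X Y : 'M[K]_(N * N)) :
  op23 X *m op23 Y = op23 (X *m Y).
Proof.
rewrite /op23 castmx_mulsq tensmx_mulc ?mulmx1 // => i j k l.
by rewrite !mxE; case: (k == l); rewrite ?mulr1n ?mul1r ?mulr1 ?mulr0n ?mul0r ?mulr0.
Qed.

Lemma op12_1 (K : pzRingType) N : op12 (1%:M : 'M[K]_(N * N)) = 1%:M.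
Proof. by rewrite /op12 tens11. Qed.

Lemma op23_1 (K : pzRingType) N : op23 (1%:M : 'M[K]_(N * N)) = 1%:M.
Proof. by rewrite /op23 tens11 castmx1sq. Qed.

Lemma abstract_alg (T : pzRingType) (a b c r3 ib ic x : T) :
  ib * b = 1 -> b * ib = 1 -> ic * c = 1 -> c * ic = 1 ->
  a * c * b = c * b * r3 -> b * c * b = c * b * c ->
  x * r3 = r3 * x -> x * c = c * x ->
  a * b * (c * b * x * ib * ic) = c * b * x * ib * ic * (a * b).
Proof.
move=> h1 h2 h3 h4 hc hb hx3 hxc.
have H1 y : ib * (b * y) = y by rewrite mulrA h1 mul1r.
have H2 y : b * (ib * y) = y by rewrite mulrA h2 mul1r.
have H3 y : ic * (c * y) = y by rewrite mulrA h3 mul1r.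
have H4 y : c * (ic * y) = y by rewrite mulrA h4 mul1r.
have Hc y : a * (c * (b * y)) = c * (b * (r3 * y)) by rewrite !mulrA hc.
have Hb y : b * (c * (b * y)) = c * (b * (c * y)) by rewrite !mulrA hb.
have Hx3 y : x * (r3 * y) = r3 * (x * y) by rewrite !mulrA hx3.
have Hxc y : x * (c * y) = c * (x * y) by rewrite !mulrA hxc.
have K y : r3 * (c * (ib * (ic * y))) = ib * (ic * (a * (b * y))).
  rewrite -[r3 * _](H1) -[b * _](H3) -Hc -Hb. idtac "XX". match goal with |- ?g => idtac g end. rewrite H2 H4. done.
have K' : r3 * (c * (ib * ic)) = ib * (ic * (a * b)) by have := K 1; rewrite !mulr1.
by rewrite -!mulrA Hb Hc -Hxc -Hx3 K'.
Qed.
Lemma liftBM (C : comUnitRingType) (B : algType C) m n p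
  (X : 'M[C]_(m, n)) (Y : 'M[C]_(n, p)) :
  liftB B (X *m Y) = liftB B X *m liftB B Y.
Proof. exact: map_mxM. Qed.

Lemma liftB1 (C : comUnitRingType) (B : algType C) n :
  liftB B (1%:M : 'M[C]_n) = 1%:M.
Proof. exact: map_mx1. Qed.

Lemma op1_comm (C : comUnitRingType) (B : algType C) N (A : 'M[B]_N)
  (X : 'M[C]_(N * N)) :
  op1 A *m liftB B (op23 X) = liftB B (op23 X) *m op1 A.
Proof.
rewrite /op1 /op23 /liftB map_castmx map_mxT map_mx1 !castmx_mulsq.
rewrite tensmx_mulc; last first.
  by move=> i j k l; rewrite !mxE; case: (i == j); case: (k == l);
     rewrite ?mulr1n ?mulr0n ?mul1r ?mulr1 ?mul0r ?mulr0.
rewrite tensmx_mulc; last first.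
  by move=> i j k l; rewrite !mxE /= mulr_algl mulr_algr.
by rewrite !mulmx1 !mul1mx.
Qed.

Lemma inv12 (K : comUnitRingType) N (F : 'M[K]_(N * N)) :
  F \in unitmx -> invmx (op12 F) *m op12 F = 1%:M /\ op12 F *m invmx (op12 F) = 1%:M.
Proof.
move=> uF.
have h : op12 (invmx F) *m op12 F = 1%:M by rewrite op12M mulVmx // op12_1.
have [_ u] := mulmx1_unit h.
by split; [rewrite mulVmx | rewrite mulmxV].
Qed.

Lemma inv23 (K : comUnitRingType) N (F : 'M[K]_(N * N)) :
  F \in unitmx -> invmx (op23 F) *m op23 F = 1%:M /\ op23 F *m invmx (op23 F) = 1%:M.
Proof.
move=> uF.
have h : op23 (invmx F) *m op23 F = 1%:M by rewrite op23M mulVmx // op23_1.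
have [_ u] := mulmx1_unit h.
by split; [rewrite mulVmx | rewrite mulmxV].
Qed.

Theorem mainTheorem3 (Rr : realType) (N : nat) (R F : 'M[Rr[i]]_(N * N))
  (B : algType Rr[i]) (A : 'M[B]_N) :
  is_braiding R -> is_braiding F -> compatible R F ->
  let calR12 : 'M[B]_(N * N * N) := liftB B (op12 R) *m liftB B (op12 F) in
  let A3 : 'M[B]_(N * N * N) :=
    liftB B (op23 F) *m liftB B (op12 F) *m op1 A
      *m liftB B (invmx (op12 F)) *m liftB B (invmx (op23 F)) in
  calR12 *m A3 = A3 *m calR12.
Proof.
move=> [uR bR] [uF bF] [c1 c2] /=.
have [i12a i12b] := @inv12 _ _ F uF.
have [i23a i23b] := @inv23 _ _ F uF.
have L (X Y : 'M[Rr[i]]_(N * N * N)) : liftB B X *m liftB B Y = liftB B (X *m Y).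
  by rewrite liftBM.
have L1 : liftB B (1%:M : 'M[Rr[i]]_(N * N * N)) = 1%:M by rewrite liftB1.
have := @abstract_alg _ (liftB B (op12 R)) (liftB B (op12 F)) (liftB B (op23 F))
  (liftB B (op23 R)) (liftB B (invmx (op12 F))) (liftB B (invmx (op23 F))) (op1 A).
rewrite -!mulmxE !L i12a i12b i23a i23b L1 c1 bF !op1_comm.
by move=> h; apply: h.
Qed.
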